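(* Let $0<\delta<1$ and let $G$ be a $d$-regular graph on $n$ vertices whose second largest adjacency eigenvalue satisfies $\lambda_2\le\delta d$ (in particular, this holds for any $(n,d,\lambda)$-graph with $\lambda<\delta d$). Then, with activation threshold $r=2$, every set of vertices of size larger than $\frac{n}{(1-\delta)d}$ is contagious.
   Context: Bootstrap percolation with threshold $r\ge 2$ on a graph $G=(V,E)$: given a set $A_0\subseteq V$ of seeds, define for $i\ge1$ $A_i=A_{i-1}\cup\{v:|N(v)\cap A_{i-1}|\ge r\}$, where $N(v)$ is the set of neighbors of $v$, and $\langle A_0\rangle=\bigcup_i A_i$. The set $A_0$ is contagious if $\langle A_0\rangle=V$. The adjacency eigenvalues are ordered $d=\lambda_1\ge\lambda_2\ge\dots\ge\lambda_n$; an $(n,d,\lambda)$-graph is a $d$-regular $n$-vertex graph with $\max\{|\lambda_2|,|\lambda_n|\}\le\lambda$. *)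

(* Defs.v *)
From HB Require Import structures.
From mathcomp Require Import all_boot all_order all_algebra all_field.
Set Implicit Arguments. Unset Strict Implicit. Unset Printing Implicit Defensive.
Import Order.TTheory GRing.Theory Num.Theory.

Definition simple_graph n (e : rel 'I_n) : Prop :=
  symmetric e /\ irreflexive e.

Definition nbhd n (e : rel 'I_n) (v : 'I_n) : {set 'I_n} := [set w | e v w].

Definition regular n (e : rel 'I_n) (d : nat) : Prop :=
  forall v : 'I_n, #|nbhd e v| = d.

Local Open Scope ring_scope.
Definition adjmx n (e : rel 'I_n) : 'M[algC]_n :=
  \matrix_(i, j) ((e i j : nat)%:R).

(* The eigenvalues of a square complex matrix, listed with multiplicity
   (the roots of its characteristic polynomial). *)
Definition eigenvalues n (A : 'M[algC]_n) : seq algC :=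
  sval (closed_field_poly_normal (char_poly A)).

Definition sorted_eigenvalues n (A : 'M[algC]_n) : seq algC :=
  sort (fun x y : algC => y <= x) (eigenvalues A).

(* lambda_k (1-indexed) of the adjacency matrix. *)
Definition adj_eigen n (e : rel 'I_n) (k : nat) : algC :=
  nth 0 (sorted_eigenvalues (adjmx e)) k.-1.

Local Close Scope ring_scope.

Definition bp_step n (e : rel 'I_n) (r : nat) (A : {set 'I_n}) : {set 'I_n} :=
  A :|: [set v | r <= #|nbhd e v :&: A|].

Definition bp_stage n (e : rel 'I_n) (r : nat) (A0 : {set 'I_n}) (i : nat) :=
  iter i (bp_step e r) A0.

Definition bp_closure n (e : rel 'I_n) (r : nat) (A0 : {set 'I_n}) : 'I_n -> Prop :=
  fun v => exists i, v \in bp_stage e r A0 i.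

Definition contagious n (e : rel 'I_n) (r : nat) (A0 : {set 'I_n}) : Prop :=
  forall v : 'I_n, bp_closure e r A0 v.

(* Main.v *)
Require Import Defs.
From HB Require Import structures.
From mathcomp Require Import all_boot all_order all_algebra all_field.
From mathcomp Require Import ring.
Import Order.TTheory GRing.Theory Num.Theory.
Local Open Scope ring_scope.
Set Implicit Arguments. Unset Strict Implicit.

Section Aux.
Local Open Scope sesquilinear_scope.
Lemma adj_herm n (e : rel 'I_n) : symmetric e -> adjmx e \is hermsymmx.
Proof.
move=> se; rewrite is_hermitianmxE expr0 scale1r; apply/eqP/matrixP=> i j.
by rewrite !mxE conjC_nat se.
Qed.

Lemma spec_decomp n (e : rel 'I_n) : symmetric e ->
  [/\ adjmx e = (spectralmx (adjmx e))^t* *m diag_mx (spectral_diag (adjmx e)) *m spectralmx (adjmx e),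
      spectralmx (adjmx e) *m (spectralmx (adjmx e))^t* = 1%:M,
      (spectralmx (adjmx e))^t* *m spectralmx (adjmx e) = 1%:M &
      spectral_diag (adjmx e) \is a realmx].
Proof.
move=> se; set A := adjmx e; set P := spectralmx A; set s := spectral_diag A.
have hA := adj_herm se.
have PU : P *m P^t* = 1%:M by apply/eqP; exact: spectral_unitarymx.
split => //.
- by rewrite -invmx_unitary ?spectral_unitarymx //; apply/orthomx_spectralP/hermitian_normalmx.
- exact: mulmx1C.
- exact: hermitian_spectral_diag_real.
Qed.

Lemma char_poly_conj (R : comNzRingType) n (Q M S : 'M[R]_n) :
  S *m Q = 1%:M -> char_poly (Q *m M *m S) = char_poly M.
Proof.
move=> SQ.
rewrite /char_poly /char_poly_mx.
have -> : 'X%:M - map_mx polyC (Q *m M *m S) =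
   map_mx polyC Q *m ('X%:M - map_mx polyC M) *m map_mx polyC S.
  rewrite mulmxBr mulmxBl !map_mxM; congr (_ - _).
  rewrite mul_mx_scalar -scalemxAl; by rewrite -map_mxM (mulmx1C SQ) map_mx1 scalemx1.
rewrite !det_mulmx mulrC mulrA -det_mulmx -map_mxM SQ map_mx1 det1 mul1r.
by [].
Qed.

Lemma eig_perm n (M P : 'M[algC]_n) (s : 'rV[algC]_n) :
  M = P^t* *m diag_mx s *m P -> P *m P^t* = 1%:M ->
  perm_eq (eigenvalues M) [seq s 0 k | k <- enum 'I_n].
Proof.
move=> -> PP.
rewrite /eigenvalues; case: closed_field_poly_normal => r /= Hr.
rewrite (monicP (char_poly_monic _)) scale1r in Hr.
rewrite char_poly_conj // char_poly_trig ?diag_mx_is_trig // in Hr.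
apply: prod_XsubC_eq; rewrite -Hr big_map big_enum /=.
by apply: eq_bigr => i _; rewrite mxE eqxx mulr1n.
Qed.

Lemma sort_part n (s : 'rV[algC]_n) (L0 : seq algC) : (1 < n)%N ->
  s \is a mxOver Num.real -> perm_eq L0 [seq s 0 k | k <- enum 'I_n] ->
  nth 0 (sort (fun x y : algC => y <= x) L0) 1 \is Num.real /\
  exists i1 : 'I_n, forall k, k != i1 -> s 0 k <= nth 0 (sort (fun x y : algC => y <= x) L0) 1.
Proof.
move=> n1 /mxOverP sR pL.
set R := (fun x y : algC => y <= x).
have realL0 : all (mem Num.real) L0.
  apply/allP => x; rewrite (perm_mem pL) => /mapP [k _ ->]; exact: sR.
have tot : {in Num.real &, total R}.
  by move=> x y xr yr; rewrite /R orbC; apply: real_leVge.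
have sortedL := sort_sorted_in tot realL0.
have sz : size (sort R L0) = n by rewrite size_sort (perm_size pL) size_map size_enum_ord.
have realL : forall x, x \in sort R L0 -> x \is Num.real.
  by move=> x; rewrite mem_sort => xL; exact: (allP realL0).
have pL' : perm_eq (sort R L0) [seq s 0 k | k <- enum 'I_n] by rewrite perm_sort.
move: sortedL sz realL pL'.
case: (sort R L0) => [|m1 [|m2 rest]] //=.
- by move=> _ sz0; rewrite -sz0 in n1.
- by move=> _ sz0; rewrite -sz0 in n1.
move=> /andP [_ srt] _ realL pL'.
have m2R : m2 \is Num.real by apply: realL; rewrite !inE eqxx orbT.
split => //.
have restle : all (R m2) rest.
  apply: order_path_min => //.
  by move=> a b c; rewrite /R => h1 h2; apply: le_trans h2 h1.
have cnt : leq (count (fun x : algC => (m2 < x)%R) [seq s 0 k | k <- enum 'I_n]) 1.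
  rewrite -(permP pL') /= ltxx.
  have -> : count (fun x : algC => (m2 < x)%R) rest = 0%N.
    apply/eqP; rewrite -leqn0 leqNgt -has_count; apply/hasPn => x xr.
    by apply/negP => h; have := lt_le_trans h (allP restle x xr); rewrite ltxx.
  by case: (m2 < m1).
case: (pickP (fun k => m2 < s 0 k)) => [i1 Hi1 | none].
  exists i1 => k kni; rewrite real_leNgt ?sR //; apply/negP => Hk.
  move: cnt; rewrite count_map -size_filter.
  have : leq (size [:: i1; k]) (size (filter (preim (s 0) (fun x : algC => (m2 < x)%R)) (enum 'I_n))).
    apply: uniq_leq_size; first by rewrite /= inE eq_sym kni.
    by move=> j; rewrite !inE mem_filter mem_enum andbT => /orP [] /eqP ->.
  by move=> h1 h2; have := leq_trans h1 h2.
have n0 : (0 < n)%N by apply: ltn_trans n1.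
exists (Ordinal n0) => k _; rewrite real_leNgt ?sR //; apply/negP => Hk.
by have := none k; rewrite /= Hk.
Qed.

Lemma quad_bound n (M P : 'M[algC]_n) (s : 'rV[algC]_n) (mu : algC) (i1 : 'I_n)
  (w : 'rV[algC]_n) :
  M = P^t* *m diag_mx s *m P -> P^t* *m P = 1%:M ->
  (forall k, k != i1 -> s 0 k <= mu) -> (w *m P^t*) 0 i1 = 0 ->
  (w *m M *m w^t*) 0 0 <= mu * (w *m w^t*) 0 0.
Proof.
move=> -> PP sle y0.
set y := w *m P^t*.
have ey : P *m w^t* = y^t* by rewrite /y trmx_mul map_mxM trmxCK.
have -> : w *m (P^t* *m diag_mx s *m P) *m w^t* = y *m diag_mx s *m y^t*.
  by rewrite -ey !mulmxA.
have -> : w *m w^t* = y *m y^t*.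
  by rewrite -ey mulmxA -[w *m P^t* *m P]mulmxA PP mulmx1.
move: y0; rewrite -/y; clearbody y => y0.
rewrite mul_mx_diag !mxE mulr_sumr; apply: ler_sum => k _.
rewrite !mxE mulrAC -normCK.
have [-> | kn] := eqVneq k i1; first by rewrite y0 normr0 expr0n /= mul0r mulr0.
by rewrite [mu * _]mulrC ler_wpM2l ?exprn_ge0 ?normr_ge0 ?sle.
Qed.

Lemma sum_bool_card (T : finType) (P : pred T) : (\sum_i (P i : nat))%N = #|P|.
Proof. by rewrite -sum1_card [RHS]big_mkcond /=; apply: eq_bigr => i _; rewrite unfold_in; case: (P i). Qed.

Lemma deg_sum n (e : rel 'I_n) d i : regular e d -> (\sum_j (e i j : nat))%N = d.
Proof. by move=> Hr; rewrite sum_bool_card -(Hr i) /nbhd cardsE. Qed.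

Section G.
Variables (n d : nat) (e : rel 'I_n) (B : {set 'I_n}) (a b : algC).
Hypothesis se : symmetric e.
Hypothesis Hr : regular e d.
Let f i := if i \in B then a else b.
Let w : 'rV[algC]_n := \row_i f i.
Let E := (\sum_i \sum_j (e i j && (i \notin B) && (j \in B) : nat))%N.

Lemma norm_w : (w *m w^t*) 0 0 = #|B|%:R * `|a|^+2 + #|~: B|%:R * `|b|^+2.
Proof.
rewrite !mxE.
under eq_bigr => i _ do rewrite !mxE -normCK.
have -> : \sum_i `|f i| ^+ 2 = \sum_i (((i \in B) : nat)%:R * `|a|^+2 + ((i \in ~: B) : nat)%:R * `|b|^+2).
  by apply: eq_bigr => i _; rewrite /f inE; case: (i \in B); rewrite /= ?mul1r ?mul0r ?addr0 ?add0r.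
by rewrite big_split /= -!mulr_suml -!natr_sum !sum_bool_card.
Qed.

Lemma E_sym : E = (\sum_i \sum_j (e i j && (i \in B) && (j \notin B) : nat))%N.
Proof.
rewrite /E exchange_big; apply: eq_bigr => i _; apply: eq_bigr => j _.
by rewrite se andbAC andbC andbA.
Qed.

Lemma quad_w : (w *m adjmx e *m w^t*) 0 0 =
  d%:R * (w *m w^t*) 0 0 - E%:R * `|a - b|^+2.
Proof.
have -> : d%:R * (w *m w^t*) 0 0 = \sum_i \sum_j (e i j : nat)%:R * (f i * (f i)^*).
  rewrite !mxE mulr_sumr; apply: eq_bigr => i _.
  by rewrite -mulr_suml -natr_sum (deg_sum i Hr) /w !mxE.
have -> : (w *m adjmx e *m w^t*) 0 0 = \sum_i \sum_j (e i j : nat)%:R * (f i * (f j)^*).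
  rewrite !mxE; under eq_bigr do rewrite !mxE mulr_suml.
  rewrite exchange_big; apply: eq_bigr => i _; apply: eq_bigr => j _.
  by rewrite !mxE mulrCA mulrA.
apply/eqP; rewrite eq_sym subr_eq addrC -subr_eq -sumrB; apply/eqP.
have -> : \sum_i (\sum_j (e i j : nat)%:R * (f i * (f i)^*) -
     \sum_j (e i j : nat)%:R * (f i * (f j)^*)) =
   \sum_i \sum_j (((e i j && (i \notin B) && (j \in B)) : nat)%:R * (b * (b - a)^*) +
               ((e i j && (i \in B) && (j \notin B)) : nat)%:R * (a * (a - b)^*)).
  apply: eq_bigr => i _; rewrite -sumrB; apply: eq_bigr => j _.
  rewrite /f; case: (e i j); case: (i \in B); case: (j \in B) => /=; ring.
under eq_bigr do rewrite big_split /= -!mulr_suml -!natr_sum.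
rewrite big_split /= -!mulr_suml -!natr_sum -E_sym -/E.
rewrite -mulrDr normCK; congr (_ * _).
by rewrite -[b - a]opprB rmorphN /= mulrN addrC -mulrBl.
Qed.

Lemma E_le : (forall i, i \notin B -> (#|nbhd e i :&: B| <= 1)%N) -> (E <= #|~: B|)%N.
Proof.
move=> cl.
have -> : #|~: B| = (\sum_i ((i \notin B) : nat))%N.
  by rewrite sum_bool_card; apply: eq_card => j; rewrite !inE.
rewrite /E; apply: leq_sum => i _.
case iB: (i \in B).
  by rewrite /= big1 // => j _; rewrite andbF.
rewrite /=; apply: leq_trans (cl i (negbT iB)).
rewrite sum_bool_card; apply: subset_leq_card; apply/subsetP => j.
rewrite unfold_in /= andbT => /andP [h1 h2]; by rewrite /nbhd !inE h1 h2.
Qed.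
End G.

End Aux.


Lemma numeric (c N E X x y bb ss : algC) :
 0 < c -> 0 < N -> 0 <= x -> 0 <= y -> 0 <= X -> 0 <= E -> 0 < bb -> 0 <= ss ->
 N = bb * x^+2 + ss * y^+2 -> c * N <= E * X -> E <= ss -> X <= (x+y)^+2 ->
 bb + ss < c * bb -> False.
Proof.
move=> c0 N0 x0 y0 X0 E0 b0 s0 HN H1 HE HX Hn.
have h1 : E * X <= ss * (x+y)^+2 by apply: ler_pM.
have h2 : bb * (ss * (x+y)^+2) <= N * (bb + ss).
  rewrite -subr_ge0.
  have -> : N * (bb + ss) - bb * (ss * (x+y)^+2) = (bb * x - ss * y)^+2 by rewrite HN; ring.
  apply: real_exprn_even_ge0 => //.
  by rewrite rpredB // rpredM // ger0_real // ltW.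
have h3 : bb * (c * N) <= N * (bb + ss).
  apply: le_trans h2; apply: ler_wpM2l; first exact: ltW.
  exact: le_trans H1 h1.
have h4 : N * (bb + ss) < N * (c * bb) by rewrite ltr_pM2l.
have := le_lt_trans h3 h4.
have -> : N * (c * bb) = bb * (c * N) by ring.
by rewrite ltxx.
Qed.

Local Close Scope ring_scope.
Lemma stage_sub n (e : rel 'I_n) r (A : {set 'I_n}) j : bp_stage e r A j \subset bp_stage e r A j.+1.
Proof. by rewrite /bp_stage iterS /bp_step subsetUl. Qed.

Lemma stage_lt n (e : rel 'I_n) r (A : {set 'I_n}) j : bp_stage e r A j.+1 != bp_stage e r A j ->
  #|bp_stage e r A j| < #|bp_stage e r A j.+1|.
Proof. by move=> h; apply: proper_card; rewrite properEneq eq_sym h stage_sub. Qed.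

Lemma stab n (e : rel 'I_n) r (A : {set 'I_n}) : exists i, bp_stage e r A i.+1 = bp_stage e r A i.
Proof.
have key : forall k, (exists i, bp_stage e r A i.+1 = bp_stage e r A i) \/
                     k < #|bp_stage e r A k.+1|.
  elim => [|k [ex|IH]]; last 1 first.
  - case: (eqVneq (bp_stage e r A k.+2) (bp_stage e r A k.+1)) => h.
      by left; exists k.+1.
    by right; apply: leq_trans (stage_lt h).
  - case: (eqVneq (bp_stage e r A 1) (bp_stage e r A 0)) => h.
      by left; exists 0.
    by right; apply: leq_trans (stage_lt h).
  - by left.
case: (key n) => // h; exfalso.
by have := leq_trans h (max_card _); rewrite card_ord ltnn.
Qed.

Lemma A_sub n (e : rel 'I_n) r (A : {set 'I_n}) j : A \subset bp_stage e r A j.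
Proof. elim: j => [|j IH] //; exact: subset_trans IH (stage_sub _ _ _ _). Qed.

Local Open Scope ring_scope.

Unset Implicit Arguments.

Theorem lemma1 (n d : nat) (e : rel 'I_n) (delta : algC)
  (Hg : simple_graph e) (Hreg : regular e d) (Hd : (0 < d)%N)
  (Hdelta0 : 0 < delta) (Hdelta1 : delta < 1)
  (Hlam2 : adj_eigen e 2 <= delta * d%:R)
  (A : {set 'I_n})
  (HA : n%:R / ((1 - delta) * d%:R) < (#|A|)%:R) :
  contagious e 2 A.
Proof.
move=> v.
have [i Hi] := stab e 2 A.
set Bf := bp_stage e 2 A i in Hi.
case vB: (v \in Bf); first by exists i.
exfalso.
have HB : bp_step e 2 Bf = Bf := Hi.
have closed : forall u, u \notin Bf -> (#|nbhd e u :&: Bf| <= 1)%N.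
  move=> u uB; rewrite leqNgt; apply/negP => h.
  move: uB; rewrite -{1}HB /bp_step in_setU inE h orbT //.
have c0 : 0 < (1 - delta) * d%:R by rewrite mulr_gt0 ?subr_gt0 ?ltr0n.
rewrite ltr_pdivrMr // in HA.
have AB : (#|A| <= #|Bf|)%N by apply: subset_leq_card; apply: A_sub.
have s1 : (0 < #|~: Bf|)%N by apply/card_gt0P; exists v; rewrite inE vB.
have b1 : (0 < #|Bf|)%N.
  apply: leq_trans AB; rewrite lt0n; apply/negP => /eqP A0.
  by move: HA; rewrite A0 mul0r => h; have := lt_le_trans h (ler0n _ n); rewrite ltxx.
have nbs : n = (#|Bf| + #|~: Bf|)%N by rewrite cardsC card_ord.
have n2 : (1 < n)%N by rewrite nbs; apply: (leq_add b1 s1).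
have [hM PU UP sreal] := spec_decomp Hg.1.
set P := spectralmx (adjmx e) in hM PU UP.
set s := spectral_diag (adjmx e) in hM sreal.
have pe := eig_perm hM PU.
have [mu2R [i1 Hi1]] := sort_part n2 sreal pe.
rewrite /adj_eigen /sorted_eigenvalues /= in Hlam2.
set mu2 := nth 0 _ 1 in mu2R Hi1 Hlam2.
pose g a b := ((\row_j (if j \in Bf then a else b)) *m P^t*)%sesqui 0 i1.
have glin : forall a b, g a b = a * g 1 0 + b * g 0 1.
  move=> a b; rewrite /g !mxE !mulr_sumr -big_split; apply: eq_bigr => j _.
  by rewrite !mxE; case: (j \in Bf) => /=; rewrite !(mul1r, mul0r, mulr0, addr0, add0r).
have [a [b [ab0 hab]]] : exists a b : algC, ((a != 0) || (b != 0)) /\ g a b = 0.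
  case: (eqVneq (g 0 1) 0) => c20.
    by exists 0, 1; split; [rewrite oner_neq0 orbT | rewrite glin c20 mul0r mulr0 addr0].
  exists (g 0 1), (- g 1 0); split; first by rewrite c20.
  by rewrite glin mulNr mulrC subrr.
have QB := quad_bound hM UP Hi1 hab.
rewrite (quad_w Bf a b Hg.1 Hreg) (norm_w Bf a b) in QB.
set N := #|Bf|%:R * _ + _ in QB.
set E := (X in _ - X%:R * _ <= _) in QB.
have N0 : 0 < N.
  case/orP: ab0 => h.
    apply: (@lt_le_trans _ _ (#|Bf|%:R * `|a|^+2)).
      by rewrite mulr_gt0 ?exprn_gt0 ?normr_gt0 ?ltr0n.
    by rewrite /N lerDl mulr_ge0 ?exprn_ge0.
  apply: (@lt_le_trans _ _ (#|~: Bf|%:R * `|b|^+2)).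
    by rewrite mulr_gt0 ?exprn_gt0 ?normr_gt0 ?ltr0n.
  by rewrite /N lerDr mulr_ge0 ?exprn_ge0.
apply: (@numeric ((1 - delta) * d%:R) N E%:R (`|a - b| ^+ 2) `|a| `|b|
          #|Bf|%:R #|~: Bf|%:R) => //.
- by rewrite exprn_ge0.
- by rewrite ltr0n.
- have h1 : mu2 * N <= delta * d%:R * N by rewrite ler_wpM2r // ltW.
  have h2 := le_trans QB h1.
  rewrite -subr_ge0.
  have -> : E%:R * `|a - b| ^+ 2 - (1 - delta) * d%:R * N =
            delta * d%:R * N - (d%:R * N - E%:R * `|a - b| ^+ 2) by ring.
  by rewrite subr_ge0.
- by rewrite ler_nat; apply: E_le.
- by rewrite lerXn2r ?nnegrE ?addr_ge0 // ler_normB.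
- rewrite -natrD -nbs; apply: lt_le_trans HA _.
  rewrite mulrC; apply: ler_wpM2l; [exact: ltW | by rewrite ler_nat].
Qed.
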